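(* Let $\rho$ be a polymatroid on a finite set $E$ and let $M_1,M_2,\ldots,M_k$ be matroids on $E$ with $\rho=r_{M_1}+r_{M_2}+\cdots+r_{M_k}$. (1) Let $X$ be any incidence set of $\rho$. Then there is exactly one index $i\in[k]$ for which all elements of $X$ are parallel in $M_i$ (i.e., $X$ is contained in a single parallel class of $M_i$), and for every $j\in[k]$ with $j\neq i$, no two elements of $X$ are parallel in $M_j$. If, moreover, the equation $\rho(Y)=1+\sum_{e\in Y}(\rho(e)-1)$ also holds for $Y=X$, then for every $j\neq i$, the only subsets of $X$ that are circuits of $M_j$ are singletons. (2) Let $X$ and $Y$ be incidence sets of $\rho$ and suppose there are elements $a\in X$ and $b\in Y$ with $\rho(\{a,b\})=\rho(a)+\rho(b)$. If $X\cap Y\neq\emptyset$, then $|X\cap Y|=1$, and the unique index $i$ for which the elements of $X$ are parallel in $M_i$ differs from the unique index $j$ for which the elements of $Y$ are parallel in $M_j$.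
   Context: A polymatroid on a finite set $E$ is a function $\rho:2^E\to\mathbb{Z}$ with $\rho(\emptyset)=0$, $\rho(A)\le\rho(B)$ whenever $A\subseteq B\subseteq E$, and $\rho(A\cup B)+\rho(A\cap B)\le\rho(A)+\rho(B)$ for all $A,B\subseteq E$. For matroids $M_1,\dots,M_k$ on $E$, $r_{M_1}+\cdots+r_{M_k}$ denotes the pointwise sum of their rank functions. An incidence set of $\rho$ is a subset $X\subseteq E$ with $|X|\ge 2$ such that for every $Y\subseteq X$ with $|Y|\in\{1,2,3\}$, $\rho(Y)=1+\sum_{e\in Y}(\rho(e)-1)$. Here $[k]=\{1,\dots,k\}$ and $\rho(e)$ means $\rho(\{e\})$. *)

(* Defs.v *)
From mathcomp Require Import all_boot all_order all_algebra.
Set Implicit Arguments. Unset Strict Implicit. Unset Printing Implicit Defensive.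
Import Order.TTheory GRing.Theory Num.Theory.

Definition matroid_rank (E : finType) (r : {set E} -> nat) : Prop :=
  [/\ forall A : {set E}, r A <= #|A|,
      forall A B : {set E}, A \subset B -> r A <= r B
    & forall A B : {set E}, r (A :|: B) + r (A :&: B) <= r A + r B].

Definition m_indep (E : finType) (r : {set E} -> nat) (A : {set E}) : bool :=
  r A == #|A|.

Definition m_circuit (E : finType) (r : {set E} -> nat) (C : {set E}) : bool :=
  ~~ m_indep r C && [forall D : {set E}, (D \proper C) ==> m_indep r D].

Definition m_parallel (E : finType) (r : {set E} -> nat) (e f : E) : bool :=
  ((e == f) && (r [set e] == 1%N)) || m_circuit r [set e; f].

Definition all_parallel (E : finType) (r : {set E} -> nat) (X : {set E}) : Prop :=
  forall e f, e \in X -> f \in X -> m_parallel r e f.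

Definition no_two_parallel (E : finType) (r : {set E} -> nat) (X : {set E}) : Prop :=
  forall e f, e \in X -> f \in X -> e != f -> ~~ m_parallel r e f.

Local Open Scope ring_scope.

Definition polymatroid (E : finType) (rho : {set E} -> int) : Prop :=
  [/\ rho set0 = 0,
      forall A B : {set E}, A \subset B -> rho A <= rho B
    & forall A B : {set E}, rho (A :|: B) + rho (A :&: B) <= rho A + rho B].

Definition incidence_eq (E : finType) (rho : {set E} -> int) (Y : {set E}) : Prop :=
  rho Y = 1 + \sum_(e in Y) (rho [set e] - 1).

Definition incidence_set (E : finType) (rho : {set E} -> int) (X : {set E}) : Prop :=
  (2 <= #|X|)%N /\
  forall Y : {set E}, Y \subset X -> (1 <= #|Y| <= 3)%N -> incidence_eq rho Y.

(* Main.v *)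
Require Import Defs.
From mathcomp Require Import all_boot all_order all_algebra.
From mathcomp Require Import zify.
Import Order.TTheory GRing.Theory Num.Theory.
Set Implicit Arguments. Unset Strict Implicit. Unset Printing Implicit Defensive.

Lemma mr_card (E : finType) (r : {set E} -> nat) (A : {set E}) : matroid_rank r -> r A <= #|A|.
Proof. by case=> h _ _. Qed.
Lemma mr_mono (E : finType) (r : {set E} -> nat) (A B : {set E}) : matroid_rank r -> A \subset B -> r A <= r B.
Proof. by case=> _ h _; apply: h. Qed.
Lemma mr_sub (E : finType) (r : {set E} -> nat) (A B : {set E}) : matroid_rank r ->
  r (A :|: B) + r (A :&: B) <= r A + r B.
Proof. by case=> _ _ h; apply: h. Qed.
Lemma mr0 (E : finType) (r : {set E} -> nat) : matroid_rank r -> r set0 = 0.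
Proof. move=> h; have := mr_card set0 h; rewrite cards0; lia. Qed.
Lemma mr1 (E : finType) (r : {set E} -> nat) (e : E) : matroid_rank r -> r [set e] <= 1.
Proof. by move=> h; have := mr_card [set e] h; rewrite cards1. Qed.
Lemma mr_subadd (E : finType) (r : {set E} -> nat) (A B : {set E}) : matroid_rank r ->
  r (A :|: B) <= r A + r B.
Proof. move=> h; have := mr_sub A B h; lia. Qed.

Definition Sg (E : finType) (r : {set E} -> nat) (Y : {set E}) := \sum_(e in Y) r [set e].
Definition dl (E : finType) (r : {set E} -> nat) (Y : {set E}) := Sg r Y - r Y.

Lemma mr_Sg (E : finType) (r : {set E} -> nat) (Y : {set E}) : matroid_rank r -> r Y <= Sg r Y.
Proof.
move=> Hr; move: {2}#|Y| (leqnn #|Y|) => n; elim: n Y => [|n IH] Y hY.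
  have -> : Y = set0 by apply: cards0_eq; lia.
  by rewrite (mr0 Hr).
case: (set_0Vmem Y) => [->|[x xY]]; first by rewrite (mr0 Hr).
rewrite /Sg (big_setD1 x xY) /=.
have h := mr_subadd [set x] (Y :\ x) Hr; rewrite setD1K // in h.
have := IH (Y :\ x); rewrite (cardsD1 x Y) xY in hY.
rewrite /Sg => h2; have := h2 ltac:(lia); lia.
Qed.

Lemma dl_mono (E : finType) (r : {set E} -> nat) (C Y : {set E}) : matroid_rank r ->
  C \subset Y -> dl r C <= dl r Y.
Proof.
move=> Hr hCY; rewrite /dl.
have hS : Sg r Y = Sg r C + Sg r (Y :\: C).
  by rewrite /Sg (big_setID C) /= (setIidPr hCY).
have h := mr_subadd C (Y :\: C) Hr.
have hU : C :|: (Y :\: C) = Y.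
  apply/setP=> x; rewrite !inE; case xC: (x \in C) => //=.
  by rewrite (subsetP hCY x xC).
rewrite hU in h.
have := mr_Sg (Y :\: C) Hr; have := mr_Sg C Hr; lia.
Qed.

Lemma Sg2 (E : finType) (r : {set E} -> nat) (e f : E) : e != f -> Sg r [set e; f] = r [set e] + r [set f].
Proof. by move=> hef; rewrite /Sg big_setU1 ?big_set1 // in_set1. Qed.

Lemma par_iff (E : finType) (r : {set E} -> nat) (e f : E) : matroid_rank r -> e != f ->
  m_parallel r e f <-> [/\ r [set e] = 1, r [set f] = 1 & r [set e; f] = 1].
Proof.
move=> Hr hef; rewrite /m_parallel (negbTE hef) /= /m_circuit /m_indep cards2 hef /=.
split.
  case/andP=> hn /forallP hall.
  have he := hall [set e]; have hf := hall [set f].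
  rewrite properEcard cards1 cards2 hef /= in he.
  rewrite properEcard cards1 cards2 hef /= in hf.
  have se : [set e] \subset [set e; f] by rewrite sub1set !inE eqxx.
  have sf : [set f] \subset [set e; f] by rewrite sub1set !inE eqxx orbT.
  rewrite se /= in he; rewrite sf /= in hf; move/eqP: he => he1; move/eqP: hf => hf1.
  have := mr_mono Hr se.
  have := mr_card [set e; f] Hr; rewrite cards2 hef.
  move/eqP: hn => hn; rewrite he1 hf1 => h1 h2; split => //; lia.
case=> h1 h2 h3; apply/andP; split; first by rewrite h3.
apply/forallP=> D; apply/implyP; rewrite properEcard cards2 hef => /andP[hsub hc].
have : (#|D| == 0) || (#|D| == 1) by case: #|D| hc => [|[|]].
case/orP=> [/eqP /cards0_eq -> | /cards1P [x hx]]; first by rewrite (mr0 Hr) cards0.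
rewrite hx in hsub *; rewrite cards1; have := subsetP hsub x (set11 x); rewrite in_set2.
by case/orP=> /eqP ->; [rewrite h1 | rewrite h2].
Qed.

Ltac subt := apply/subsetP=> z; rewrite !inE;
  repeat match goal with |- context[?x == ?y] => case: (x == y) end; done.

Lemma Sg3 (E : finType) (r : {set E} -> nat) (e f g : E) : e != f -> e != g -> f != g ->
  Sg r [set e; f; g] = r [set e] + r [set f] + r [set g].
Proof.
move=> hef heg hfg.
have -> : [set e; f; g] = e |: [set f; g].
  apply/setP=> x; rewrite !inE; by case: (x == e); case: (x == f); case: (x == g).
rewrite /Sg big_setU1 /=; last by rewrite !inE negb_or hef heg.
by rewrite -/(Sg r [set f; g]) Sg2 // addnA.
Qed.

Lemma dl2 (E : finType) (r : {set E} -> nat) (e f : E) : matroid_rank r -> e != f ->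
  [/\ dl r [set e; f] <= 1 & m_parallel r e f <-> dl r [set e; f] = 1].
Proof.
move=> Hr hef.
have h1 : r [set e] <= r [set e; f] by apply: (mr_mono Hr); subt.
have h2 : r [set f] <= r [set e; f] by apply: (mr_mono Hr); subt.
have h3 := mr1 e Hr; have h4 := mr1 f Hr.
rewrite par_iff // /dl Sg2 //; split; first lia.
split; [case=> *; lia | move=> h; split; lia].
Qed.

Lemma rK (E : finType) (r : {set E} -> nat) (A B : {set E}) b : matroid_rank r ->
  b \in A -> b \in B -> r [set b] = 1 -> r A <= 1 -> r B <= 1 -> r (A :|: B) <= 1.
Proof.
move=> Hr bA bB hb hA hB.
have := mr_sub A B Hr.
have : r [set b] <= r (A :&: B) by apply: (mr_mono Hr); rewrite sub1set inE bA bB.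
lia.
Qed.

Lemma rank_le1 (E : finType) (r : {set E} -> nat) (X : {set E}) : matroid_rank r ->
  (forall e, e \in X -> r [set e] = 1) ->
  (forall e f, e \in X -> f \in X -> r [set e; f] <= 1) -> r X <= 1.
Proof.
move=> Hr; move: {2}#|X| (leqnn #|X|) => n; elim: n X => [|n IH] X hn h1 h2.
  have -> : X = set0 by apply: cards0_eq; lia.
  by rewrite (mr0 Hr).
case: (set_0Vmem X) => [->|[x xX]]; first by rewrite (mr0 Hr).
case: (set_0Vmem (X :\ x)) => [hE|[y yX']].
  have hX : X = [set x] by rewrite -(setD1K xX) hE setU0.
  by rewrite hX; apply: mr1.
have yX : y \in X by move: yX'; rewrite !inE => /andP[].
have hxy : x != y by move: yX'; rewrite !inE eq_sym => /andP[].
have hsub : X \subset (X :\ x) :|: [set x; y].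
  apply/subsetP=> z zX; rewrite !inE zX; by case: (z == x).
have := mr_mono Hr hsub.
have hA : r (X :\ x) <= 1.
  apply: IH.
  - by move: hn; rewrite (cardsD1 x X) xX; lia.
  - by move=> e; rewrite inE => /andP[_ /h1].
  - by move=> e f; rewrite !inE => /andP[_ eX] /andP[_ fX]; apply: h2.
have yB : y \in [set x; y] by rewrite !inE eqxx orbT.
have := rK Hr yX' yB (h1 y yX) hA (h2 x y xX yX).
lia.
Qed.

Lemma sum_ge1 k (h : 'I_k -> nat) i : h i <= \sum_(l < k) h l.
Proof. rewrite (bigD1 i) //=; lia. Qed.

Lemma sum_ge2 k (h : 'I_k -> nat) i j : i != j -> h i + h j <= \sum_(l < k) h l.
Proof. move=> hij; rewrite (bigD1 i) //= (bigD1 j) /=; [lia | by rewrite eq_sym]. Qed.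

Lemma sum_ge3 k (h : 'I_k -> nat) i j p : i != j -> i != p -> j != p ->
  h i + h j + h p <= \sum_(l < k) h l.
Proof.
move=> hij hip hjp; rewrite (bigD1 i) //= (bigD1 j) /=; last by rewrite eq_sym.
rewrite (bigD1 p) /=; last by rewrite ![p == _]eq_sym hjp hip.
lia.
Qed.

Lemma sum_pos k (h : 'I_k -> nat) : 0 < \sum_(l < k) h l -> exists i, 0 < h i.
Proof.
case: (pickP (fun l => 0 < h l)) => [i hi|hn]; first by exists i.
by rewrite big1 // => i _; move: (hn i) => /= /negbT; rewrite -eqn0Ngt => /eqP.
Qed.

Definition T (E : finType) k (M : 'I_k -> {set E} -> nat) (Y : {set E}) :=
  \sum_(l < k) dl (M l) Y.

Local Open Scope ring_scope.
Lemma sumZ (I : finType) (P : pred I) (F : I -> nat) :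
  \sum_(i | P i) (F i)%:Z = (\sum_(i | P i) F i)%N%:Z.
Proof. by elim/big_rec2: _ => // i x y _ ->; rewrite PoszD. Qed.
Local Close Scope ring_scope.

Lemma T_id (E : finType) k (M : 'I_k -> {set E} -> nat) (Y : {set E}) :
  (forall l, matroid_rank (M l)) ->
  T M Y + \sum_(l < k) M l Y = \sum_(e in Y) \sum_(l < k) M l [set e].
Proof.
move=> HM; rewrite /T -big_split /= exchange_big /=.
by apply: eq_bigr => l _; rewrite /dl subnK //; apply: mr_Sg.
Qed.

Local Open Scope ring_scope.
Lemma rhoZ (E : finType) (rho : {set E} -> int) k (M : 'I_k -> {set E} -> nat)
  (Hsum : forall A : {set E}, (rho A = \sum_(i < k) Posz (M i A))%R) A :
  rho A = (\sum_(i < k) M i A)%N%:Z.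
Proof. by rewrite Hsum sumZ. Qed.

Lemma incid_T (E : finType) (rho : {set E} -> int) k (M : 'I_k -> {set E} -> nat)
  (HM : forall i, matroid_rank (M i))
  (Hsum : forall A : {set E}, (rho A = \sum_(i < k) Posz (M i A))%R) Y :
  incidence_eq rho Y -> (T M Y + 1 = #|Y|)%N.
Proof.
rewrite /incidence_eq => h.
have e1 : \sum_(e in Y) (rho [set e] - 1) =
          (\sum_(e in Y) \sum_(l < k) M l [set e])%N%:Z - (#|Y|)%:Z.
  have e2 : \sum_(e in Y) rho [set e] = \sum_(e in Y) (\sum_(l < k) M l [set e])%:Z.
    by apply: eq_bigr => e _; apply: rhoZ.
  by rewrite sumrB sumr_const natz e2 sumZ.
rewrite e1 (rhoZ Hsum) in h.
have := T_id Y HM.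

lia.
Qed.
Local Close Scope ring_scope.

Lemma Tsub (E : finType) (rho : {set E} -> int) k (M : 'I_k -> {set E} -> nat)
  (HM : forall i, matroid_rank (M i))
  (Hsum : forall A : {set E}, (rho A = \sum_(i < k) Posz (M i A))%R) (X Y : {set E}) :
  incidence_set rho X -> Y \subset X -> 1 <= #|Y| <= 3 -> T M Y + 1 = #|Y|.
Proof. by case=> _ hI hYX hc; apply: (incid_T HM Hsum); apply: hI. Qed.

Lemma T2 (E : finType) (rho : {set E} -> int) k (M : 'I_k -> {set E} -> nat)
  (HM : forall i, matroid_rank (M i))
  (Hsum : forall A : {set E}, (rho A = \sum_(i < k) Posz (M i A))%R) (X : {set E}) (e f : E) :
  incidence_set rho X -> e \in X -> f \in X -> e != f -> T M [set e; f] = 1.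
Proof.
move=> hX eX fX hef.
have := Tsub HM Hsum hX (_ : [set e; f] \subset X).
rewrite cards2 hef => h; have := h ltac:(by rewrite subUset !sub1set eX fX) isT; lia.
Qed.

Lemma T3 (E : finType) (rho : {set E} -> int) k (M : 'I_k -> {set E} -> nat)
  (HM : forall i, matroid_rank (M i))
  (Hsum : forall A : {set E}, (rho A = \sum_(i < k) Posz (M i A))%R) (X : {set E}) (e f g : E) :
  incidence_set rho X -> e \in X -> f \in X -> g \in X -> e != f -> e != g -> f != g ->
  T M [set e; f; g] = 2.
Proof.
move=> hX eX fX gX hef heg hfg.
have hc : #|[set e; f; g]| = 3.
  rewrite cardsU cards2 hef cards1.
  have -> : [set e; f] :&: [set g] = set0.
    apply/setP=> x; rewrite !inE; case: (eqVneq x g) => [->|]; rewrite ?andbF //.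
    by rewrite andbT ![g == _]eq_sym (negbTE heg) (negbTE hfg).
  by rewrite cards0.
have := Tsub HM Hsum hX (_ : [set e; f; g] \subset X).
rewrite hc => h; have := h ltac:(by rewrite !subUset !sub1set eX fX gX) isT; lia.
Qed.

Lemma Tpair (E : finType) (rho : {set E} -> int) k (M : 'I_k -> {set E} -> nat)
  (HM : forall i, matroid_rank (M i))
  (Hsum : forall A : {set E}, (rho A = \sum_(i < k) Posz (M i A))%R) (X : {set E}) (e f : E) :
  incidence_set rho X -> e \in X -> f \in X -> e != f ->
  exists l, dl (M l) [set e; f] = 1.
Proof.
move=> hX eX fX hef; have h := T2 HM Hsum hX eX fX hef.
have hs : 0 < \sum_l dl (M l) [set e; f] by move: h; rewrite /T => ->.
have [l hl] := sum_pos hs.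
exists l; have [h1 _] := dl2 (HM l) hef; lia.
Qed.

Lemma Uniq (E : finType) (rho : {set E} -> int) k (M : 'I_k -> {set E} -> nat)
  (HM : forall i, matroid_rank (M i))
  (Hsum : forall A : {set E}, (rho A = \sum_(i < k) Posz (M i A))%R) (X : {set E}) (e f : E) (l m : 'I_k) :
  incidence_set rho X -> e \in X -> f \in X -> e != f ->
  dl (M l) [set e; f] = 1 -> dl (M m) [set e; f] = 1 -> l = m.
Proof.
move=> hX eX fX hef hl hm; have h := T2 HM Hsum hX eX fX hef.
apply/eqP; apply: contraT => hlm.
have := sum_ge2 (fun l => dl (M l) [set e; f]) hlm; move: h; rewrite /T => -> /=; rewrite hl hm; lia.
Qed.

Lemma Tge2 (E : finType) k (M : 'I_k -> {set E} -> nat) (Y : {set E}) i j :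
  i != j -> dl (M i) Y + dl (M j) Y <= T M Y.
Proof. move=> hij; exact: (sum_ge2 (fun l => dl (M l) Y) hij). Qed.

Lemma dl1 (E : finType) (r : {set E} -> nat) (e f : E) : matroid_rank r -> e != f ->
  dl r [set e; f] = 1 -> [/\ r [set e] = 1, r [set f] = 1 & r [set e; f] = 1].
Proof. move=> Hr hef h; have [_ hp] := dl2 Hr hef; apply/(par_iff Hr hef); exact/hp. Qed.

Lemma TL (E : finType) (rho : {set E} -> int) k (M : 'I_k -> {set E} -> nat)
  (HM : forall i, matroid_rank (M i))
  (Hsum : forall A : {set E}, (rho A = \sum_(i < k) Posz (M i A))%R)
  (X : {set E}) (e f g : E) (l m : 'I_k) :
  incidence_set rho X -> e \in X -> f \in X -> g \in X -> e != f -> e != g -> f != g ->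
  dl (M l) [set e; f] = 1 -> dl (M m) [set f; g] = 1 -> l = m.
Proof.
move=> hX eX fX gX hef heg hfg hl hm.
have hT := T3 HM Hsum hX eX fX gX hef heg hfg.
set S := [set e; f; g] in hT *.
have sEF : [set e; f] \subset S by rewrite /S; subt.
have sFG : [set f; g] \subset S by rewrite /S; subt.
have sEG : [set e; g] \subset S by rewrite /S; subt.
have [p hp] := Tpair HM Hsum hX eX gX heg.
apply/eqP; apply: contraT => hlm.
have hlS := dl_mono (HM l) sEF; have hmS := dl_mono (HM m) sFG.
have hpS := dl_mono (HM p) sEG.
have h2 := sum_ge2 (fun l => dl (M l) S) hlm.
move: hT; rewrite /T => hT; rewrite /= hT in h2.
case: (eqVneq p l) => [epl|hpl].
  subst p.
  have [a1 a2 a3] := dl1 (HM l) hef hl; have [b1 b2 b3] := dl1 (HM l) heg hp.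
  have hu := rK (b := e) (A := [set e; f]) (B := [set e; g]) (HM l)
     ltac:(by rewrite !inE eqxx) ltac:(by rewrite !inE eqxx) a1 ltac:(by rewrite a3) ltac:(by rewrite b3).
  have hs : M l S <= M l ([set e; f] :|: [set e; g]) by apply: (mr_mono (HM l)); rewrite /S; subt.
  have hd : dl (M l) S >= 2.
    rewrite /dl /S Sg3 // a1 a2 b2 -/S; clear -hu hs; lia.
  have hmS1 : 1 <= dl (M m) S by rewrite -hm.
  clear -hd hmS1 h2; lia.
case: (eqVneq p m) => [epm|hpm].
  subst p.
  have [a1 a2 a3] := dl1 (HM m) hfg hm; have [b1 b2 b3] := dl1 (HM m) heg hp.
  have hu := rK (b := g) (A := [set e; g]) (B := [set f; g]) (HM m)
     ltac:(by rewrite !inE eqxx orbT) ltac:(by rewrite !inE eqxx orbT) a2 ltac:(by rewrite b3) ltac:(by rewrite a3).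
  have hs : M m S <= M m ([set e; g] :|: [set f; g]) by apply: (mr_mono (HM m)); rewrite /S; subt.
  have hd : dl (M m) S >= 2.
    rewrite /dl /S Sg3 // b1 a1 a2 -/S; clear -hu hs; lia.
  have hlS1 : 1 <= dl (M l) S by rewrite -hl.
  clear -hd hlS1 h2; lia.
have h3 := sum_ge3 (fun l => dl (M l) S) hlm (ltac:(by rewrite eq_sym) : l != p)
   (ltac:(by rewrite eq_sym) : m != p).
rewrite /= hT in h3.
have hlS1 : 1 <= dl (M l) S by rewrite -hl.
have hmS1 : 1 <= dl (M m) S by rewrite -hm.
have hpS1 : 1 <= dl (M p) S by rewrite -hp.
clear -h3 hlS1 hmS1 hpS1; lia.
Qed.

Lemma share (E : finType) (rho : {set E} -> int) k (M : 'I_k -> {set E} -> nat)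
  (HM : forall i, matroid_rank (M i))
  (Hsum : forall A : {set E}, (rho A = \sum_(i < k) Posz (M i A))%R)
  (X : {set E}) (a b c : E) (l m : 'I_k) :
  incidence_set rho X -> a \in X -> b \in X -> c \in X -> a != b -> b != c ->
  dl (M l) [set a; b] = 1 -> dl (M m) [set b; c] = 1 -> l = m.
Proof.
move=> hX aX bX cX hab hbc hl hm.
case: (eqVneq a c) => [eac|hac].
  subst c; rewrite setUC in hm.
  exact: (Uniq HM Hsum hX aX bX hab hl hm).
exact: (TL HM Hsum hX aX bX cX hab hac hbc hl hm).
Qed.

Lemma part1 (E : finType) (rho : {set E} -> int) (k : nat)
    (M : 'I_k -> {set E} -> nat)
    (HM : forall i, matroid_rank (M i))
    (Hsum : forall A : {set E}, (rho A = \sum_(i < k) Posz (M i A))%R)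
    (X : {set E}) : incidence_set rho X ->
     exists i : 'I_k,
       [/\ all_parallel (M i) X,
           (forall j : 'I_k, all_parallel (M j) X -> j = i),
           (forall j : 'I_k, j != i -> no_two_parallel (M j) X)
         & (incidence_eq rho X ->
              forall j : 'I_k, j != i ->
              forall C : {set E}, C \subset X -> m_circuit (M j) C ->
                #|C| = 1%N)].
Proof.
move=> hX; have [h2 _] := hX.
have [e0 [f0 [e0X f0X hef0]]] := card_gt1P h2.
have [i hi] := Tpair HM Hsum hX e0X f0X hef0.
have Kl : forall e f, e \in X -> f \in X -> e != f -> dl (M i) [set e; f] = 1.
  move=> e f eX fX hef; have [l hl] := Tpair HM Hsum hX eX fX hef.
  suff <- : l = i by [].
  have hfe : f != e by rewrite eq_sym.
  rewrite setUC in hl.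
  case: (eqVneq e e0) => [ee0|hee0].
    subst e0; exact: (share HM Hsum hX fX eX f0X hfe hef0 hl hi).
  have [p hp] := Tpair HM Hsum hX eX e0X hee0.
  have <- : p = i by exact: (share HM Hsum hX eX e0X f0X hee0 hef0 hp hi).
  exact: (share HM Hsum hX fX eX e0X hfe hee0 hl hp).
have sing : forall e, e \in X -> M i [set e] = 1.
  move=> e eX; case: (eqVneq e e0) => [->|hee0].
    by have [] := dl1 (HM i) hef0 hi.
  by have [] := dl1 (HM i) hee0 (Kl e e0 eX e0X hee0).
exists i; split.
- move=> e f eX fX; case: (eqVneq e f) => [<-|hef].
    by rewrite /m_parallel eqxx (sing e eX).
  have [_ hp] := dl2 (HM i) hef; apply/hp; exact: Kl.
- move=> j hj; have [_ hp] := dl2 (HM j) hef0.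
  have := hj e0 f0 e0X f0X => /hp hj1.
  exact: (Uniq HM Hsum hX e0X f0X hef0 hj1 hi).
- move=> j hji e f eX fX hef; apply/negP => hpar.
  have [_ hp] := dl2 (HM j) hef; move/hp: hpar => hj1.
  by move: hji; rewrite (Uniq HM Hsum hX eX fX hef hj1 (Kl e f eX fX hef)) eqxx.
move=> hXeq j hji C hCX hC.
have hTX := incid_T HM Hsum hXeq.
have hSi : Sg (M i) X = #|X|.
  by rewrite /Sg -sum1_card; apply: eq_bigr => e eX; apply: sing.
have hri : M i X <= 1.
  apply: (rank_le1 (HM i)); first exact: sing.
  move=> e f eX fX; case: (eqVneq e f) => [<-|hef].
    by rewrite setUid; apply: mr1.
  by have [_ _ ->] := dl1 (HM i) hef (Kl e f eX fX hef).
have hdi : dl (M i) X + 1 >= #|X|.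
  rewrite /dl hSi.

lia.
have h2s := Tge2 M X hji.
have hdj : dl (M j) X = 0 by lia.
have hdC : dl (M j) C = 0 by have := dl_mono (HM j) hCX; lia.
move: hC; rewrite /m_circuit /m_indep => /andP [hn /forallP hall].
have hC0 : #|C| != 0.
  apply: contra hn => /eqP /cards0_eq ->; by rewrite (mr0 (HM j)) cards0.
apply/eqP; rewrite eqn_leq lt0n hC0 andbT; apply: contraT; rewrite -ltnNge => hC2.
have hs : Sg (M j) C = #|C|.
  rewrite /Sg -sum1_card; apply: eq_bigr => e eC.
  have := hall [set e]; rewrite properEcard sub1set eC cards1 hC2 /=.
  by move/eqP.
have := mr_Sg C (HM j); move: hdC hn; rewrite /dl hs => hdC /eqP hn; lia.
Qed.

Lemma sing_ap (E : finType) (r : {set E} -> nat) (X : {set E}) (e : E) : matroid_rank r ->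
  all_parallel r X -> 1 < #|X| -> e \in X -> r [set e] = 1.
Proof.
move=> Hr hap h2 eX; have [x [y [xX yX hxy]]] := card_gt1P h2.
have [g [gX heg]] : exists g, g \in X /\ e != g.
  case: (eqVneq e x) => [exy|hex]; last by exists x.
  by exists y; split => //; rewrite exy.
by have /(par_iff Hr heg) [] := hap e g eX gX.
Qed.

Lemma pair_ap (E : finType) (r : {set E} -> nat) (X : {set E}) (e f : E) : matroid_rank r ->
  all_parallel r X -> e \in X -> f \in X -> r [set e; f] <= 1.
Proof.
move=> Hr hap eX fX; case: (eqVneq e f) => [<-|hef].
  by rewrite setUid; apply: mr1.
by have /(par_iff Hr hef) [_ _ ->] := hap e f eX fX.
Qed.

Local Open Scope ring_scope.

Theorem lemma2p5 (E : finType) (rho : {set E} -> int) (k : nat)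
    (M : 'I_k -> {set E} -> nat)
    (Hrho : polymatroid rho)
    (HM : forall i, matroid_rank (M i))
    (Hsum : forall A : {set E}, rho A = \sum_(i < k) ((M i A)%:Z)) :
  (forall X : {set E}, incidence_set rho X ->
     exists i : 'I_k,
       [/\ all_parallel (M i) X,
           (forall j : 'I_k, all_parallel (M j) X -> j = i),
           (forall j : 'I_k, j != i -> no_two_parallel (M j) X)
         & (incidence_eq rho X ->
              forall j : 'I_k, j != i ->
              forall C : {set E}, C \subset X -> m_circuit (M j) C ->
                #|C| = 1%N)])
  /\
  (forall (X Y : {set E}) (a b : E),
     incidence_set rho X -> incidence_set rho Y ->
     a \in X -> b \in Y -> rho [set a; b] = rho [set a] + rho [set b] ->
     X :&: Y != set0 ->
     #|X :&: Y| = 1%N /\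
     (forall i j : 'I_k, all_parallel (M i) X -> all_parallel (M j) Y -> i != j)).
Proof.
split; first exact: (part1 HM Hsum).
move=> X Y a b hX hY aX bY hab hXY.
have [c /setIP [cX cY]] := set0Pn _ hXY.
have hneq : forall i j : 'I_k, all_parallel (M i) X -> all_parallel (M j) Y -> i != j.
  move=> i j hi hj; apply/eqP => eij; subst j.
  have [hX2 _] := hX; have [hY2 _] := hY.
  have ha := sing_ap (HM i) hi hX2 aX.
  have hb := sing_ap (HM i) hj hY2 bY.
  have hc := sing_ap (HM i) hi hX2 cX.
  have hac := pair_ap (HM i) hi aX cX.
  have hcb := pair_ap (HM i) hj cY bY.
  have hu := rK (b := c) (A := [set a; c]) (B := [set c; b]) (HM i)
     ltac:(by rewrite !inE eqxx orbT) ltac:(by rewrite !inE eqxx) hc hac hcb.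
  have hs : (M i [set a; b] <= M i ([set a; c] :|: [set c; b]))%N.
    by apply: (mr_mono (HM i)); subt.
  rewrite !(rhoZ Hsum) in hab.
  have hge := sum_ge1 (fun l => M l [set a]) i.
  case: (eqVneq a b) => [eab|hab'].
    subst b; rewrite setUid in hab; have h0 : (\sum_(l < k) M l [set a] = 0)%N by move: hab; clear; lia.
    by move: h0; rewrite (bigD1 i) //= ha.
  have h2 := T_id [set a; b] HM.
  rewrite big_setU1 /= ?big_set1 in h2; last by rewrite inE.
  have hd : (1 <= dl (M i) [set a; b])%N.
    rewrite /dl Sg2 // ha hb; clear -hu hs; lia.
  have h1 := sum_ge1 (fun l => dl (M l) [set a; b]) i; rewrite -/(T M _) /= in h1.
  have hab2 : (Posz (\sum_(l < k) M l [set a; b])%N = Posz (\sum_(l < k) M l [set a])%N + Posz (\sum_(l < k) M l [set b])%N)%R := hab.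
  move: hab2; rewrite -!PoszD => /eqP; rewrite eqz_nat => /eqP hab2.
  have hT0 : T M [set a; b] = 0%N.
    move: h2; rewrite hab2 => /eqP.
    rewrite -{2}(add0n (\sum_(l < k) M l [set a] + \sum_(l < k) M l [set b])%N) eqn_add2r.
    by move/eqP.
  by move: (leq_trans hd h1); rewrite hT0.
split => //.
apply/eqP; rewrite eqn_leq card_gt0 hXY andbT; apply: contraT; rewrite -ltnNge.
move=> /card_gt1P [c1 [d1 [h1 h2 h3]]].
move: h1 h2 => /setIP [c1X c1Y] /setIP [d1X d1Y].
have [i [hiX _ _ _]] := part1 HM Hsum hX.
have [j [hjY _ _ _]] := part1 HM Hsum hY.
have [_ hpi] := dl2 (HM i) h3; have [_ hpj] := dl2 (HM j) h3.
have ei := (iffLR hpi) (hiX c1 d1 c1X d1X); have ej := (iffLR hpj) (hjY c1 d1 c1Y d1Y).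
have := hneq i j hiX hjY.
by rewrite (Uniq HM Hsum hX c1X d1X h3 ei ej) eqxx.
Qed.
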